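(* $A_3(16,11)\le 29$.
   Context: $[q]=\{0,\dots,q-1\}$; Hamming distance between words of $[q]^n$ is the number of differing coordinates; $A_q(n,d)$ is the maximum cardinality of a code $C\subseteq[q]^n$ in which any two distinct codewords have Hamming distance at least $d$. *)

(* Defs.v *)
From mathcomp Require Import all_boot.
Set Implicit Arguments. Unset Strict Implicit. Unset Printing Implicit Defensive.

Definition word (q n : nat) := {ffun 'I_n -> 'I_q}.

Definition hamming (q n : nat) (x y : word q n) : nat :=
  #|[set i : 'I_n | x i != y i]|.

Definition min_dist_ge (q n d : nat) (C : {set word q n}) : bool :=
  [forall x in C, forall y in C, (x != y) ==> (d <= hamming x y)].

Definition A (q n d : nat) : nat :=
  \max_(C : {set word q n} | min_dist_ge d C) #|C|.

(* Main.v *)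
Require Import Defs.
From mathcomp Require Import all_boot zify.
Set Implicit Arguments. Unset Strict Implicit. Unset Printing Implicit Defensive.

Notation W := (word 3 16).

Definition agr (y z : W) : nat := \sum_(k < 16) (y k == z k).
Definition cls (S : {set W}) (k : 'I_16) (t : 'I_3) := [set z in S | z k == t].

Lemma hamming_sum (y z : W) : hamming y z = \sum_(k < 16) (y k != z k).
Proof.
rewrite /hamming -sum1_card big_mkcond /=.
by apply: eq_bigr => k _; rewrite inE; case: (y k != z k).
Qed.

Lemma agr_ham (y z : W) : agr y z + hamming y z = 16.
Proof.
rewrite hamming_sum /agr -big_split /=.
rewrite (eq_bigr (fun _ => 1)); first by rewrite sum1_card card_ord.
by move=> k _; case: (y k == z k).
Qed.

Lemma agr_refl y : agr y y = 16.
Proof.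
by rewrite /agr (eq_bigr (fun _ => 1)) ?sum1_card ?card_ord // => k _; rewrite eqxx.
Qed.

Lemma agr_le5 C y z : min_dist_ge 11 C -> y \in C -> z \in C -> y != z -> agr y z <= 5.
Proof.
move=> /forallP/(_ y)/implyP/(_ _)/forallP H yC zC yz.
have := H yC z; rewrite zC yz /= => h.
have := agr_ham y z; lia.
Qed.

Lemma G (T : finType) (S : {set T}) (f : T -> nat) c x :
  x \in S -> (forall y, y \in S -> y != x -> f y <= c) ->
  \sum_(y in S) f y + c <= f x + #|S| * c.
Proof.
move=> xS H; rewrite (big_setD1 x) //= (cardsD1 x S) xS.
have : \sum_(y in S :\ x) f y <= \sum_(y in S :\ x) c.
  by apply: leq_sum => y; rewrite !inE => /andP[h1 h2]; apply: H.
rewrite sum_nat_const; lia.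
Qed.

Lemma Gl (T : finType) (S : {set T}) (f : T -> nat) c x :
  x \in S -> (forall y, y \in S -> y != x -> c <= f y) ->
  f x + #|S| * c <= \sum_(y in S) f y + c.
Proof.
move=> xS H; rewrite (big_setD1 x) //= (cardsD1 x S) xS.
have : \sum_(y in S :\ x) c <= \sum_(y in S :\ x) f y.
  by apply: leq_sum => y; rewrite !inE => /andP[h1 h2]; apply: H.
rewrite sum_nat_const; lia.
Qed.

Lemma E1 (S : {set W}) k x : \sum_(y in S) (x k == y k) = #|cls S k (x k)|.
Proof.
rewrite /cls -sum1_card big_mkcond [RHS]big_mkcond /=.
by apply: eq_bigr => y _; rewrite !inE eq_sym; case: (y \in S); case: (_ == _).
Qed.

Lemma E2 (S : {set W}) k :
  \sum_(y in S) #|cls S k (y k)| = \sum_(t < 3) #|cls S k t| * #|cls S k t|.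
Proof.
rewrite (partition_big (fun y : W => y k) predT) //=.
apply: eq_bigr => t _.
rewrite (eq_bigr (fun _ => #|cls S k t|)); last by move=> y /andP[_ /eqP->].
rewrite sum_nat_const mulnC; congr (_ * _); apply: eq_card => y.
by rewrite !inE.
Qed.

Lemma E3 (S : {set W}) k : \sum_(t < 3) #|cls S k t| = #|S|.
Proof.
rewrite -sum1_card (partition_big (fun y : W => y k) predT) //=.
apply: eq_bigr => t _; rewrite sum1dep_card; apply: eq_card => y.
by rewrite !inE.
Qed.

Lemma sq1 a : 7 * a <= a * a + 12.
Proof. case: (leqP a 3) => h. nia. nia. Qed.
Lemma amgm a b : 2*a*b <= a*a+b*b.
Proof. case: (leqP a b) => h.
- have [d ->] : exists d, b = a + d by exists (b - a); lia. nia.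
- have [d ->] : exists d, a = b + d by exists (a - b); lia. nia. Qed.
Lemma sq3 a b c : 7*(a+b+c) <= a*a+b*b+c*c + 36 /\ (a+b+c)*(a+b+c) <= 3*(a*a+b*b+c*c).
Proof. have := sq1 a; have := sq1 b; have := sq1 c. split. lia.
have := amgm a b; have := amgm a c; have := amgm b c. nia. Qed.
Lemma fin m X Tj : m*m <= Tj -> Tj + 36 + 16*(7*m) <= X + 576 + 7*m -> 3*Tj + 16*(m*m) <= 3*X + m*m -> X <= m*(5*m+11) -> m <= 10.
Proof. move=> h1 h2 h3 h4.
have : m <= 11 by nia. move=> h5. case: (leqP m 10) => // h6. have : m = 11 by lia. move=> e; subst m. lia. Qed.

Lemma tot_eq (S : {set W}) : \sum_(y in S) \sum_(z in S) agr y z =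
  \sum_(k < 16) \sum_(t < 3) #|cls S k t| * #|cls S k t|.
Proof.
rewrite (eq_bigr (fun y : W => \sum_(k < 16) #|cls S k (y k)|)); last first.
  by move=> y _; rewrite /agr exchange_big /=; apply: eq_bigr => k _; exact: E1.
by rewrite exchange_big /=; apply: eq_bigr => k _; exact: E2.
Qed.

Lemma Tb (S : {set W}) k : 7 * #|S| <= \sum_(t < 3) #|cls S k t| * #|cls S k t| + 36 /\
   #|S| * #|S| <= 3 * \sum_(t < 3) #|cls S k t| * #|cls S k t|.
Proof. rewrite -(E3 S k) !big_ord_recr !big_ord0 /= !add0n; apply: sq3. Qed.

Lemma sumT (F : 'I_16 -> nat) : \sum_(k in [set: 'I_16]) F k = \sum_(k < 16) F k.
Proof. by apply: eq_bigl => k; rewrite in_setT. Qed.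

Lemma core C j s : min_dist_ge 11 C -> #|cls C j s| <= 10 /\
  (#|cls C j s| = 10 -> forall x y, x \in cls C j s -> y \in cls C j s -> x != y -> 5 <= agr x y).
Proof.
move=> hC. set S := cls C j s. set m := #|S|.
have SC : forall z, z \in S -> z \in C by move=> z; rewrite !inE => /andP[].
set X := \sum_(y in S) \sum_(z in S) agr y z.
set T := fun k => \sum_(t < 3) #|cls S k t| * #|cls S k t|.
have eX : X = \sum_(k < 16) T k by rewrite /X tot_eq.
have hTj : m * m <= T j.
  rewrite /T (bigD1 s) //=.
  have -> : cls S j s = S by apply/setP => z; rewrite /S /cls !inE -andbA andbb.
  exact: leq_addr.
have h1 : T j + 36 + 16 * (7 * m) <= X + 576 + 7 * m.
  have := @Gl _ [set: 'I_16] (fun k => T k + 36) (7 * m) j (in_setT j).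
  rewrite cardsT card_ord sumT big_split /= sum_nat_const card_ord -eX.
  move=> H; apply: H => k _ _; case: (Tb S k) => //.
have h2 : 3 * T j + 16 * (m * m) <= 3 * X + m * m.
  have := @Gl _ [set: 'I_16] (fun k => 3 * T k) (m * m) j (in_setT j).
  rewrite cardsT card_ord sumT /= -big_distrr /= -eX.
  move=> H; apply: H => k _ _; case: (Tb S k) => //.
have row : forall y, y \in S -> \sum_(z in S) agr y z <= 5 * m + 11.
  move=> y yS.
  have := @G _ S (agr y) 5 y yS.
  rewrite agr_refl -/m => H.
  suff : \sum_(z in S) agr y z + 5 <= 16 + m * 5 by lia.
  apply: H => z zS zy; apply: (agr_le5 hC); [exact: SC | exact: SC | by rewrite eq_sym].
have hX : X <= m * (5 * m + 11).
  rewrite /X /m -sum_nat_const; apply: leq_sum => y0 y0S; exact: row.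
split; first exact: (fin hTj h1 h2 hX).
move=> m10 x y xS yS xy; rewrite leqNgt; apply/negP => bad.
have rowx : \sum_(z in S) agr x z + 1 <= 5 * m + 11.
  rewrite (big_setD1 x) //= agr_refl.
  change (16 + \sum_(z in S :\ x) agr x z + 1 <= 5 * m + 11).
  have yS' : y \in S :\ x by rewrite in_setD1 eq_sym xy yS.
  have := @G _ (S :\ x) (agr x) 5 y yS'.
  have := cardsD1 x S; rewrite xS -/m /= => cm.
  move=> HH.
  have hh : \sum_(z in S :\ x) agr x z + 5 <= agr x y + #|S :\ x| * 5.
    apply: HH => z; rewrite in_setD1 => /andP [zx zS] zy; apply: (agr_le5 hC); [exact: SC | exact: SC | by rewrite eq_sym].
  clear HH row hX hTj h1 h2 eX; move: hh cm bad; clearbody m; move: (\sum_(z in S :\ x) agr x z) (agr x y) #|S :\ x| => Q a c; lia.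
have := @G _ S (fun y => \sum_(z in S) agr y z) (5 * m + 11) x xS.
rewrite -/X -/m => H.
have : X + (5 * m + 11) <= \sum_(z in S) agr x z + m * (5 * m + 11).
  by apply: H => z zS _; apply: row.
rewrite m10 in hTj h1 h2 hX rowx * => h.
lia.
Qed.

Theorem proposition5p11 : A 3 16 11 <= 29.
Proof.
apply/bigmax_leqP => C hC; rewrite leqNgt; apply/negP => big.
have n10 : forall k t, #|cls C k t| <= 10 by move=> k t; case: (core k t hC).
have c30 : forall k t, #|cls C k t| = 10.
  move=> k t; have := E3 C k; rewrite (bigD1 t) //=.
  have : \sum_(i < 3 | i != t) #|cls C k i| <= \sum_(i < 3 | i != t) 10.
    by apply: leq_sum => i _; apply: n10.
  rewrite sum_nat_const cardC1 card_ord /=.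
  move: (\sum_(i < 3 | i != t) #|cls C k i|) => Q.
  have := n10 k t; move: big; move: #|C| #|cls C k t| => N a; lia.
have [x xC] : exists x, x \in C.
  by apply/set0Pn; apply/eqP => e; rewrite e cards0 in big.
have e160 : \sum_(y in C) agr x y = 160.
  rewrite /agr exchange_big /= (eq_bigr (fun _ => 10)); last first.
    by move=> k _; rewrite E1 c30.
  by rewrite sum_nat_const card_ord.
have each : forall y, y \in C :\ x -> 5 %| agr x y.
  move=> y; rewrite in_setD1 => /andP [yx yC].
  case: (pickP (fun k => x k == y k)) => [k hk | h].
  - have [_ H] := core k (x k) hC.
    have h5 : 5 <= agr x y.
      apply: (H (c30 _ _)); rewrite ?inE ?xC ?yC ?eqxx ?(eq_sym (y k)) ?hk //.
      by rewrite eq_sym.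
    have := agr_le5 hC xC yC; rewrite eq_sym yx => /(_ isT) h4.
    by have -> : agr x y = 5 by lia.
  - by rewrite /agr big1 // => k _; rewrite h.
have := @dvdn_sum 5 _ (index_enum W) (mem (C :\ x)) (agr x) each.
rewrite (big_setD1 x) //= agr_refl in e160.
move: e160; move: (\sum_(i in C :\ x) agr x i) => Q e /dvdnP [q hq].
lia.
Qed.
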